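(* For the binary tree-shifts $X_{15}=(C,D)$ and $X_{17}=(C,F)$, the limit $h_{PS}$ exists, $h_{PS}(X_{15})=h_{PS}(X_{17})$, and $$\tfrac14\log2\le h_{PS}(X_{15})\le\tfrac18\log7.$$
   Context: Binary tree-shifts: $k=2$, directions $a_1,a_2$, alphabet $\{0,1\}$; $(P,Q)$ is the set of trees $t:\{a_1,a_2\}^*\to\{0,1\}$ with $P_{t_x,t_{xa_1}}=1$, $Q_{t_x,t_{xa_2}}=1$ for all nodes $x$. Matrices: $C=\begin{pmatrix}0&1\\1&0\end{pmatrix}$, $D=\begin{pmatrix}1&1\\1&0\end{pmatrix}$, $F=\begin{pmatrix}0&1\\1&1\end{pmatrix}$. $p(n)$ is the number of allowed blocks of length $n$ (labellings $t|_{\Delta_n}$, $\Delta_n$ the words of length $\le n$), and $h_{PS}=\lim_{n\to\infty}\frac{\log p(n)}{1+2+\cdots+2^n}$. *)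

(* Defs.v *)
From mathcomp Require Import all_boot all_order all_algebra.
From mathcomp Require Import all_classical all_reals all_analysis.
Set Implicit Arguments. Unset Strict Implicit. Unset Printing Implicit Defensive.
Import Order.TTheory GRing.Theory Num.Theory.

(* Directions a_1, a_2 are encoded as (0 : 'I_2), (1 : 'I_2); nodes are
   words in seq 'I_2; the node x a_i is [rcons x a_i].  Alphabet {0,1} = 'I_2. *)
Definition node := seq 'I_2.
Definition tree := node -> 'I_2.

Definition a1 : 'I_2 := ord0.
Definition a2 : 'I_2 := ord_max.

Definition mx_of (rows : seq (seq nat)) : 'M[nat]_2 :=
  \matrix_(i < 2, j < 2) nth 0%N (nth [::] rows i) j.

Definition C : 'M[nat]_2 := mx_of [:: [:: 0; 1]; [:: 1; 0]]%N.
Definition D : 'M[nat]_2 := mx_of [:: [:: 1; 1]; [:: 1; 0]]%N.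
Definition F : 'M[nat]_2 := mx_of [:: [:: 0; 1]; [:: 1; 1]]%N.

Definition in_shift (P Q : 'M[nat]_2) (t : tree) : Prop :=
  forall x : node, P (t x) (t (rcons x a1)) = 1%N /\ Q (t x) (t (rcons x a2)) = 1%N.

Fixpoint words (k : nat) : seq node :=
  if k is k'.+1 then [seq rcons w a | w <- words k', a <- [:: a1; a2]]
  else [:: [::]].
Definition Delta (n : nat) : seq node := flatten [seq words k | k <- iota 0 n.+1].

(* a block on Delta_n, encoded as the list of its labels along Delta n *)
Definition block (n : nat) := (size (Delta n)).-tuple 'I_2.

Definition p (P Q : 'M[nat]_2) (n : nat) : nat :=
  #|[set b : block n |
      `[< exists t : tree, in_shift P Q t /\ val b = map t (Delta n) >]]|.

Definition hseq {R : realType} (P Q : 'M[nat]_2) (n : nat) : R :=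
  ln ((p P Q n)%:R) / ((\sum_(i < n.+1) 2 ^ i)%N)%:R.

(* Main.v *)
Require Import Defs.
From mathcomp Require Import all_boot all_order all_algebra.
From mathcomp Require Import all_classical all_reals all_analysis.
From mathcomp Require Import ring lra zify.
Import Order.TTheory GRing.Theory Num.Theory numFieldNormedType.Exports.
Set Implicit Arguments. Unset Strict Implicit. Unset Printing Implicit Defensive.

Lemma I2_cases (c : 'I_2) : c = a1 \/ c = a2.
Proof.
case: c => [[|[|m]] Hm]; [left|right|by []]; exact: val_inj.
Qed.

Lemma words_S k : words k.+1 = [seq rcons w a | w <- words k, a <- [:: a1; a2]].
Proof. by []. Qed.

Lemma mem_words k x : (x \in words k) = (size x == k).
Proof.
elim: k x => [|k IH] x; first by case: x.
rewrite words_S; case/lastP: x => [|y c].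
  apply/negbTE/negP => /allpairsP [[w a] /= [_ _]]; by case: w.
rewrite size_rcons eqSS -IH; apply/allpairsP/idP.
  by case=> -[w a] /= [Hw _ /rcons_inj [-> _]].
move=> Hy; exists (y, c) => /=; split => //.
by case: (I2_cases c) => ->; rewrite !inE eqxx ?orbT.
Qed.

Lemma Delta_S n : Delta n.+1 = Delta n ++ words n.+1.
Proof. by rewrite /Delta -addn1 iotaD map_cat flatten_cat /= ?cats0. Qed.

Lemma mem_Delta n x : (x \in Delta n) = (size x <= n).
Proof.
elim: n => [|n IH]; first by rewrite /Delta /= inE leqn0 size_eq0.
by rewrite Delta_S mem_cat IH mem_words [RHS]leq_eqVlt ltnS orbC.
Qed.

Lemma uniq_words k : uniq (words k).
Proof.
elim: k => [|k IH] //.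
rewrite words_S allpairs_uniq //.
move=> [w a] [w' a'] /= _ _ /rcons_inj [-> ->] //.
Qed.

Lemma uniq_Delta n : uniq (Delta n).
Proof.
elim: n => [|n IH]; first by [].
rewrite Delta_S cat_uniq IH uniq_words andbT.
apply/hasPn => x Hx; rewrite /= mem_Delta; move: Hx; rewrite mem_words => /eqP ->; by rewrite ltnn.
Qed.

Definition fb n (b : block n) (x : node) : 'I_2 := nth a1 b (index x (Delta n)).
Definition mkb n (f : node -> 'I_2) : block n :=
  Tuple (introT eqP (size_map f (Delta n))).

Lemma val_mkb n f : val (mkb n f) = map f (Delta n).
Proof. by []. Qed.

Lemma fb_mkb n f x : x \in Delta n -> fb (mkb n f) x = f x.
Proof. by move=> Hx; rewrite /fb val_mkb (nth_map [::]) ?index_mem // nth_index. Qed.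

Lemma mkb_fb n (b : block n) : mkb n (fb b) = b.
Proof.
apply: val_inj; rewrite val_mkb; apply: (@eq_from_nth _ a1); first by rewrite size_map size_tuple.
move=> i; rewrite size_map => Hi.
by rewrite (nth_map [::]) // /fb index_uniq // uniq_Delta.
Qed.

Lemma fb_inj n (b b' : block n) : {in Delta n, fb b =1 fb b'} -> b = b'.
Proof.
move=> H; rewrite -(mkb_fb b) -(mkb_fb b'); apply: val_inj; rewrite !val_mkb.
exact/eq_in_map.
Qed.

Definition okP (P Q : 'M[nat]_2) (f : node -> 'I_2) x :=
  (P (f x) (f (rcons x a1)) == 1%N) && (Q (f x) (f (rcons x a2)) == 1%N).

Definition valid P Q n (b : block n) :=
  all (fun x => (size x < n) ==> okP P Q (fb b) x) (Delta n).

Lemma validP P Q n (b : block n) :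
  reflect (forall x, size x < n -> okP P Q (fb b) x) (valid P Q b).
Proof.
apply: (iffP allP) => H x.
  move=> Hx; apply: (implyP (H x _)) => //; rewrite mem_Delta; exact: ltnW.
by move=> _; apply/implyP; apply: H.
Qed.

Lemma p_valid (P Q : 'M[nat]_2) (rP : forall s, exists s', P s s' == 1%N)
  (rQ : forall s, exists s', Q s s' == 1%N) n :
  p P Q n = #|[set b : block n | valid P Q b]|.
Proof.
rewrite /p; apply: eq_card => b; rewrite !inE; apply/asboolP/idP.
  case=> t [Ht Hb].
  have Eb : b = mkb n t by apply: val_inj.
  have Ef : {in Delta n, fb b =1 t} by move=> x Hx; rewrite Eb fb_mkb.
  apply/validP => x Hx; rewrite /okP !Ef ?mem_Delta ?size_rcons ?(ltnW Hx) //.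
  by case: (Ht x) => -> ->.
move/validP => Hv.
pose sP s := xchoose (rP s); pose sQ s := xchoose (rQ s).
pose fix g (r : seq 'I_2) : 'I_2 :=
  match r with
  | [::] => fb b [::]
  | a :: r' => if size r' < n then fb b (rev r)
               else (if a == a1 then sP (g r') else sQ (g r'))
  end.
have g_in r : size r <= n -> g r = fb b (rev r).
  by case: r => [|a r] //= Hr; rewrite Hr.
exists (fun x => g (rev x)); split.
  move=> x; rewrite !rev_rcons /=.
  case: ltnP => Hx.
    rewrite size_rev in Hx; rewrite g_in ?size_rev ?(ltnW Hx) // !rev_cons !revK.
    by move: (Hv x Hx) => /andP [/eqP -> /eqP ->].
  by split; apply/eqP; [exact: (xchooseP (rP _)) | exact: (xchooseP (rQ _))].
rewrite -{1}(mkb_fb b) val_mkb; apply/eq_in_map => x; rewrite mem_Delta => Hx.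
by rewrite g_in ?size_rev // revK.
Qed.

Definition cmb n (s : 'I_2) (b1 b2 : block n) : block n.+1 :=
  mkb n.+1 (fun x => match x with
                     | [::] => s
                     | a :: y => if a == a1 then fb b1 y else fb b2 y end).
Definition lft n (b : block n.+1) : block n := mkb n (fun y => fb b (a1 :: y)).
Definition rgt n (b : block n.+1) : block n := mkb n (fun y => fb b (a2 :: y)).

Lemma fb_cmb_nil n s (b1 b2 : block n) : fb (cmb s b1 b2) [::] = s.
Proof. by rewrite fb_mkb // mem_Delta. Qed.

Lemma fb_cmb_cons n s (b1 b2 : block n) a y : size y <= n ->
  fb (cmb s b1 b2) (a :: y) = if a == a1 then fb b1 y else fb b2 y.
Proof. by move=> Hy; rewrite fb_mkb // mem_Delta. Qed.

Lemma a2_neq : (a2 == a1) = false. Proof. by []. Qed.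

Lemma cmbK n (b : block n.+1) : cmb (fb b [::]) (lft b) (rgt b) = b.
Proof.
apply: fb_inj => -[|a y]; first by rewrite fb_cmb_nil.
rewrite mem_Delta /= ltnS => Hy; rewrite fb_cmb_cons //.
by case: (I2_cases a) => ->; rewrite ?eqxx ?a2_neq fb_mkb // mem_Delta.
Qed.

Lemma lft_cmb n s (b1 b2 : block n) : lft (cmb s b1 b2) = b1.
Proof.
apply: fb_inj => y; rewrite mem_Delta => Hy.
by rewrite fb_mkb ?mem_Delta // fb_cmb_cons // eqxx.
Qed.

Lemma rgt_cmb n s (b1 b2 : block n) : rgt (cmb s b1 b2) = b2.
Proof.
apply: fb_inj => y; rewrite mem_Delta => Hy.
by rewrite fb_mkb ?mem_Delta // fb_cmb_cons // a2_neq.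
Qed.

Lemma valid_cmb P Q n s (b1 b2 : block n) :
  valid P Q (cmb s b1 b2) =
  [&& P s (fb b1 [::]) == 1%N, Q s (fb b2 [::]) == 1%N, valid P Q b1 & valid P Q b2].
Proof.
apply/validP/and4P.
  move=> H; split.
  - by move: (H [::] isT); rewrite /okP /= fb_cmb_nil fb_cmb_cons // => /andP [].
  - by move: (H [::] isT); rewrite /okP /= fb_cmb_nil !fb_cmb_cons // => /andP [].
  - apply/validP => y Hy; move: (H (a1 :: y) Hy).
    by rewrite /okP rcons_cons !fb_cmb_cons ?eqxx ?size_rcons // ltnW.
  - apply/validP => y Hy; move: (H (a2 :: y) Hy).
    by rewrite /okP rcons_cons !fb_cmb_cons ?a2_neq ?size_rcons // ltnW.
case=> HP HQ /validP H1 /validP H2 [|a y] /=.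
  by rewrite /okP /= fb_cmb_nil !fb_cmb_cons // eqxx a2_neq HP HQ.
rewrite ltnS => Hy; rewrite /okP !rcons_cons !fb_cmb_cons ?size_rcons ?(ltnW Hy) //.
by case: (I2_cases a) => ->; rewrite ?eqxx ?a2_neq; [exact: H1 | exact: H2].
Qed.

Definition A P Q n s := #|[set b : block n | valid P Q b && (fb b [::] == s)]|.

Lemma card_split n (V : pred (block n)) :
  #|[set b | V b]| = \sum_(s1 < 2) #|[set b | V b && (fb b [::] == s1)]|.
Proof.
rewrite -sum1_card (partition_big (fun b => fb b [::]) predT) //=.
by apply: eq_bigr => s1 _; rewrite -sum1_card; apply: eq_bigl => b; rewrite !inE.
Qed.

Lemma sum2 (G : 'I_2 -> nat) : \sum_(i < 2) G i = (G a1 + G a2)%N.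
Proof. by rewrite big_ord_recr big_ord1 /=; congr (G _ + G _)%N; apply: val_inj. Qed.

Lemma A_side P Q n s (M : 'M[nat]_2) :
  #|[set b : block n | valid P Q b && (M s (fb b [::]) == 1%N)]| =
  (\sum_(s1 < 2) (M s s1 == 1%N) * A P Q n s1)%N.
Proof.
rewrite card_split; apply: eq_bigr => s1 _.
case Hs: (M s s1 == 1%N).
  rewrite mul1n; apply: eq_card => b; rewrite !inE.
  by case: (fb b [::] =P s1) => [->|]; rewrite ?Hs ?andbT ?andbF.
rewrite mul0n; apply/eqP; rewrite cards_eq0; apply/eqP/setP => b; rewrite !inE.
by case: (fb b [::] =P s1) => [->|]; rewrite ?Hs ?andbT ?andbF.
Qed.

Lemma A_S P Q n s :
  A P Q n.+1 s = ((\sum_(s1 < 2) (P s s1 == 1%N) * A P Q n s1) *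
                  (\sum_(s2 < 2) (Q s s2 == 1%N) * A P Q n s2))%N.
Proof.
rewrite -!A_side -cardsX /A.
have inj : injective (fun pr : block n * block n => cmb s pr.1 pr.2).
  move=> [x1 x2] [y1 y2] /= E.
  by move: (congr1 (@lft n) E) (congr1 (@rgt n) E); rewrite !lft_cmb !rgt_cmb => -> ->.
rewrite -(card_imset _ inj); apply: eq_card => b; rewrite inE; apply/andP/imsetP.
  case=> Hv /eqP Hs; exists (lft b, rgt b).
    by rewrite inE /= !inE; move: Hv; rewrite -{1}(cmbK b) valid_cmb Hs => /and4P [-> -> -> ->].
  by rewrite /= -Hs cmbK.
case=> -[b1 b2]; rewrite inE /= !inE => /andP [/andP [H1 HP] /andP [H2 HQ]] ->.
by rewrite valid_cmb fb_cmb_nil HP HQ H1 H2 eqxx.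
Qed.

Lemma A_0 P Q s : A P Q 0 s = 1%N.
Proof.
rewrite /A -[RHS](cards1 (mkb 0 (fun _ => s))); apply: eq_card => b; rewrite !inE.
apply/idP/eqP.
  case/andP => _ /eqP Hs; apply: fb_inj => x; rewrite mem_Delta leqn0 size_eq0 => /eqP ->.
  by rewrite Hs fb_mkb.
by move=> ->; rewrite fb_mkb // eqxx andbT.
Qed.

Lemma p_A (P Q : 'M[nat]_2) (rP : forall s, exists s', P s s' == 1%N)
  (rQ : forall s, exists s', Q s s' == 1%N) n :
  p P Q n = (A P Q n a1 + A P Q n a2)%N.
Proof. by rewrite (p_valid rP rQ) card_split sum2. Qed.

Lemma C_e : [/\ C a1 a1 = 0, C a1 a2 = 1, C a2 a1 = 1 & C a2 a2 = 0]%N.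
Proof. by rewrite /C /mx_of !mxE. Qed.
Lemma D_e : [/\ D a1 a1 = 1, D a1 a2 = 1, D a2 a1 = 1 & D a2 a2 = 0]%N.
Proof. by rewrite /D /mx_of !mxE. Qed.
Lemma F_e : [/\ F a1 a1 = 0, F a1 a2 = 1, F a2 a1 = 1 & F a2 a2 = 1]%N.
Proof. by rewrite /F /mx_of !mxE. Qed.

Lemma rC s : exists s', C s s' == 1%N.
Proof. by case: C_e => _ H1 H2 _; case: (I2_cases s) => ->; [exists a2|exists a1]; rewrite ?H1 ?H2. Qed.
Lemma rD s : exists s', D s s' == 1%N.
Proof. by case: D_e => H1 _ H2 _; case: (I2_cases s) => ->; [exists a1|exists a1]; rewrite ?H1 ?H2. Qed.
Lemma rF s : exists s', F s s' == 1%N.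
Proof. by case: F_e => _ H1 H2 _; case: (I2_cases s) => ->; [exists a2|exists a1]; rewrite ?H1 ?H2. Qed.

Lemma AS_CD n : A C D n.+1 a1 = (A C D n a2 * (A C D n a1 + A C D n a2))%N /\
                A C D n.+1 a2 = (A C D n a1 * A C D n a1)%N.
Proof.
rewrite !A_S !sum2; case: C_e => -> -> -> ->; case: D_e => -> -> -> ->.
by rewrite /= !mul0n !mul1n ?add0n ?addn0.
Qed.

Lemma AS_CF n : A C F n.+1 a1 = (A C F n a2 * A C F n a2)%N /\
                A C F n.+1 a2 = (A C F n a1 * (A C F n a1 + A C F n a2))%N.
Proof.
rewrite !A_S !sum2; case: C_e => -> -> -> ->; case: F_e => -> -> -> ->.
by rewrite /= !mul0n !mul1n ?add0n ?addn0.
Qed.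

Lemma A_CF n : A C F n a1 = A C D n a2 /\ A C F n a2 = A C D n a1.
Proof.
elim: n => [|n [IH1 IH2]]; first by rewrite !A_0.
case: (AS_CF n) => -> ->; case: (AS_CD n) => -> ->; rewrite IH1 IH2; split => //.
by rewrite addnC.
Qed.

Lemma pCD n : p C D n = (A C D n a1 + A C D n a2)%N.
Proof. exact: p_A rC rD n. Qed.

Lemma pCF n : p C F n = p C D n.
Proof. by rewrite pCD (p_A rC rF) ; case: (A_CF n) => -> ->; rewrite addnC. Qed.

Lemma pCD0 : p C D 0 = 2%N.
Proof. by rewrite pCD !A_0. Qed.

Lemma pCD2 : p C D 2 = 7%N.
Proof. by rewrite pCD; case: (AS_CD 1) => -> ->; case: (AS_CD 0) => -> ->; rewrite !A_0. Qed.

Lemma pCD_le n : (p C D n.+1 <= p C D n ^ 2)%N.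
Proof.
rewrite !pCD; case: (AS_CD n) => -> ->; move: (A C D n a1) (A C D n a2) => x y.
have h := (nat_AGM2 x y).1.
move: h; rewrite !expnS expn0 !muln1 => h; nia.
Qed.

Lemma pCD_ge n : (3 * p C D n ^ 2 <= 4 * p C D n.+1)%N.
Proof.
rewrite !pCD; case: (AS_CD n) => -> ->; move: (A C D n a1) (A C D n a2) => x y.
have h := (nat_AGM2 x y).1.
move: h; rewrite !expnS expn0 !muln1 => h; nia.
Qed.

Section nat_facts.
Variable a : nat -> nat.
Hypothesis H0 : a 0 = 2.
Hypothesis H2 : a 2 = 7.
Hypothesis Hle : forall n, a n.+1 <= a n ^ 2.
Hypothesis Hge : forall n, 3 * a n ^ 2 <= 4 * a n.+1.

Lemma a_ge2 n : 2 <= a n.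
Proof.
elim: n => [|n IH]; first by rewrite H0.
have := Hge n; rewrite !expnS expn0 muln1 => H. nia.
Qed.

Lemma a_low n : 16 * 2 ^ (2 ^ n) <= 9 * a n ^ 2.
Proof.
elim: n => [|n IH]; first by rewrite H0.
have E : 2 ^ (2 ^ n.+1) = 2 ^ (2 ^ n) * 2 ^ (2 ^ n) by rewrite expnS mul2n -addnn expnD.
rewrite E; move: (2 ^ (2 ^ n)) IH => X IH.
have H := Hge n; move: (a n) (a n.+1) IH H => u v; rewrite !expnS !expn0 !muln1 => IH H.
have H1 := leq_mul IH IH; have H2' := leq_mul H H.
nia.
Qed.

Lemma a_low' n : 2 ^ (2 ^ n) <= a n ^ 2.
Proof. have := a_low n; lia. Qed.

Lemma a_up k : a k.+2 <= 7 ^ (2 ^ k).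
Proof.
elim: k => [|k IH]; first by rewrite H2.
apply: (leq_trans (Hle _)); rewrite (expnS 2 k) mulnC expnM.
by rewrite leq_exp2r.
Qed.

Lemma sumS n : (\sum_(i < n.+1) 2 ^ i).+1 = 2 ^ n.+1.
Proof.
elim: n => [|n IH]; first by rewrite big_ord1.
by rewrite big_ord_recr /= -addSn IH [in RHS]expnS mul2n addnn.
Qed.
End nat_facts.

Section real_facts.
Variable R : realType.
Variable a : nat -> nat.
Hypothesis H0 : a 0 = 2.
Hypothesis H2 : a 2 = 7.
Hypothesis Hle : forall n, a n.+1 <= a n ^ 2.
Hypothesis Hge : forall n, 3 * a n ^ 2 <= 4 * a n.+1.
Local Open Scope ring_scope.
Local Open Scope classical_set_scope.

Let q (n : nat) : R := ln (a n)%:R / (2 ^ n.+1)%N%:R.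

Let apos n : 0 < (a n)%:R :> R.
Proof. have := a_ge2 H0 H2 Hge n; rewrite ltr0n; lia. Qed.

Let m_pos n : 0 < (2 ^ n)%N%:R :> R.
Proof. by rewrite ltr0n expn_gt0. Qed.

Let T_eq n : (2 ^ n.+1)%N%:R = 2 * (2 ^ n)%N%:R :> R.
Proof. by rewrite expnS natrM. Qed.

Lemma q_ge n : ln 2 / 4 <= q n.
Proof.
have H : ln 2 * (2 ^ n)%N%:R <= 2 * ln (a n)%:R :> R.
  have Hn := a_low' H0 H2 Hge n.
  have Hn2 : ((2 ^ (2 ^ n))%N%:R : R) <= ((a n ^ 2)%N)%:R by rewrite ler_nat.
  rewrite !natrX in Hn2.
  have Hn3 : ln (2 ^+ (2 ^ n)) <= ln ((a n)%:R ^+ 2) :> R.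
    by rewrite ler_ln ?posrE ?exprn_gt0 ?apos.
  rewrite !lnXn ?apos // in Hn3.
  rewrite -!(mulr_natr (ln _)) in Hn3.
  lra.
rewrite /q T_eq ler_pdivlMr ?mulr_gt0 ?m_pos //.
lra.
Qed.

Lemma q_le k : q k.+2 <= ln 7 / 8.
Proof.
have H : ln (a k.+2)%:R <= ln 7 * (2 ^ k)%N%:R :> R.
  have Hn := a_up H2 Hle k.
  have Hn2 : ((a k.+2)%:R : R) <= ((7 ^ (2 ^ k))%N)%:R by rewrite ler_nat.
  rewrite !natrX in Hn2.
  have Hn3 : ln ((a k.+2)%:R) <= ln (7 ^+ (2 ^ k)) :> R.
    by rewrite ler_ln ?posrE ?exprn_gt0 ?apos.
  rewrite !lnXn ?apos // in Hn3.
  rewrite -!(mulr_natr (ln _)) in Hn3; lra.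
rewrite /q !T_eq ler_pdivrMr ?mulr_gt0 ?m_pos //.
have mp := m_pos k.
set m := (2 ^ k)%N%:R in H mp *.
rewrite (_ : ln 7 / 8 * (2 * (2 * (2 * m))) = ln 7 * m) //.
by field.
Qed.

Lemma q_noninc : nonincreasing_seq q.
Proof.
apply/nonincreasing_seqP => n.
have H : ln (a n.+1)%:R <= 2 * ln (a n)%:R :> R.
  have Hn := Hle n.
  have Hn2 : ((a n.+1)%:R : R) <= ((a n ^ 2)%N)%:R by rewrite ler_nat.
  rewrite !natrX in Hn2.
  have Hn3 : ln ((a n.+1)%:R) <= ln ((a n)%:R ^+ 2) :> R.
    by rewrite ler_ln ?posrE ?exprn_gt0 ?apos.
  rewrite !lnXn ?apos // in Hn3.
  rewrite -!(mulr_natr (ln _)) in Hn3; lra.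
rewrite /q (T_eq n.+1) (T_eq n) ler_pdivrMr ?mulr_gt0 ?m_pos //.
have mp := m_pos n.
set m := (2 ^ n)%N%:R in mp *.
rewrite (_ : ln (a n)%:R / (2 * m) * (2 * (2 * m)) = 2 * ln (a n)%:R) //.
field; by rewrite gt_eqF.
Qed.

Let S n : R := ((\sum_(i < n.+1) 2 ^ i)%N)%:R.

Let S_pos n : 0 < S n.
Proof. by rewrite /S ltr0n big_ord_recl expn0. Qed.

Let S_eq n : S n + 1 = (2 ^ n.+1)%N%:R.
Proof. by rewrite /S natr1 sumS. Qed.

Let S_ge n : n.+1%:R <= S n.
Proof.
rewrite /S ler_nat.
have : (\sum_(i < n.+1) 1 <= \sum_(i < n.+1) 2 ^ i)%N.
  by apply: leq_sum => i _; rewrite expn_gt0.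
by rewrite sum_nat_const card_ord muln1.
Qed.

Let hs_eq n : ln (a n)%:R / S n = q n + q n * (S n)^-1.
Proof.
rewrite /q -S_eq.
have := S_pos n; set s := S n => sp.
field; apply/andP; split; rewrite gt_eqF //; lra.
Qed.

Lemma limit_main : exists h : R,
  (fun n => ln (a n)%:R / ((\sum_(i < n.+1) 2 ^ i)%N)%:R) @ \oo --> h /\
  ln 2 / 4 <= h <= ln 7 / 8.
Proof.
have cq : cvgn q.
  apply: nonincreasing_is_cvgn; first exact: q_noninc.
  by exists (ln 2 / 4) => _ [n _ <-]; exact: q_ge.
exists (limn q); split; last first.
  apply/andP; split.
    by apply: limr_ge => //; near=> n; exact: q_ge.
  apply: limr_le => //; near=> n.
  have Hn : (2 <= n)%N by near: n; exact: nbhs_infty_ge.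
  by rewrite -(subnK Hn) addn2; exact: q_le.
have E : (fun n => ln (a n)%:R / ((\sum_(i < n.+1) 2 ^ i)%N)%:R) =
         q + (q \* (fun n => (S n)^-1)).
  by apply/funext => n; exact: hs_eq.
rewrite E -[X in _ --> X]addr0; apply: cvgD; first exact: cq.
rewrite -(mulr0 (limn q)); apply: cvgM; first exact: cq.
apply: (@squeeze_cvgr _ _ _ _ (fun=> 0) harmonic).
- near=> n; rewrite invr_ge0 ltW ?S_pos //=.
  by rewrite lef_pV2 ?posrE ?S_pos ?ltr0n // S_ge.
- exact: cvg_cst.
- exact: cvg_harmonic.
Unshelve. all: by end_near.
Qed.

End real_facts.

Local Open Scope ring_scope.
Local Open Scope classical_set_scope.

Theorem mainTheorem17 (R : realType) :
  exists h15 h17 : R,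
    (@hseq R C D @ \oo --> h15) /\
    (@hseq R C F @ \oo --> h17) /\
    h15 = h17 /\
    ln 2 / 4 <= h15 <= ln 7 / 8.
Proof.
have [h [Hc Hb]] := @limit_main R (p C D) pCD0 pCD2 pCD_le pCD_ge.
exists h, h; split; first exact: Hc.
split; last by split.
have -> : @hseq R C F = @hseq R C D by apply/funext => n; rewrite /hseq pCF.
exact: Hc.
Qed.
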